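(* Let $G$ be a dicotic nonzugzwang scoring game all of whose terminal positions are numbers. Then $G_{\sigma(G)}=m(G)$.
   Context: A scoring game is $G=\langle G^L\mid G^R\rangle$ with $G^L,G^R$ finite nonempty sets of scoring games or empty sets decorated with a real, $\emptyset^s$; $\langle\emptyset^s\mid\emptyset^s\rangle$ is the number $s$. $Ls(\langle\emptyset^s\mid G^R\rangle)=s$, $Rs(\langle G^L\mid\emptyset^s\rangle)=s$, otherwise $Ls(G)=\max_{G^l\in G^L}Rs(G^l)$, $Rs(G)=\min_{G^r\in G^R}Ls(G^r)$. Disjunctive sum $G_1+G_2$: Left options are all $G_1^l+G_2$, $G_1+G_2^l$ (Left side $\emptyset^{\ell_1+\ell_2}$ if neither has Left options); symmetrically for Right; $H+c$ for a number $c$ adds $c$ to every terminal score; $nG$ is the sum of $n$ copies of $G$. Dicotic: at every position both players have options or neither; nonzugzwang: $Ls(H)\ge Rs(H)$ at every position. For dicotic nonzugzwang $G$, the limits $\lim_{n\to\infty}Ls(nG)/n$ and $\lim_{n\to\infty}Rs(nG)/n$ exist and are equal (Milnor); their common value is the mean $m(G)$. Cooling: if $G$ is a number $k$, $G_t=k$, $\sigma(G)=0$; otherwise $\widetilde G_t=\langle \{G^l_t-t\}\mid \{G^r_t+t\}\rangle$, $t_0=\min\{t\ge0: Ls(\widetilde G_t)=Rs(\widetilde G_t)\}$, $G_t=\widetilde G_t$ for $t\le t_0$ and $G_t$ is the number $Ls(\widetilde G_{t_0})$ for $t>t_0$; $\sigma(G)=t_0$ is the temperature. Thus $G_{\sigma(G)}$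 is a number (namely $Ls(\widetilde G_{\sigma(G)})=Rs(\widetilde G_{\sigma(G)})$). *)

(* Defs.v *)
From Stdlib Require Import Reals List ClassicalEpsilon.
Import ListNotations.
Open Scope R_scope.

(** Scoring games  G = < G^L | G^R >.  Each side is either the empty set
    decorated with a real (Empty s = \emptyset^s) or a finite NONEMPTY
    set of options (Opts h hs = {h} ∪ hs). *)
Inductive game : Type :=
  | Game : side -> side -> game
with side : Type :=
  | Empty : R -> side
  | Opts : game -> list game -> side.

Definition num (s : R) : game := Game (Empty s) (Empty s).

Definition side_opts (s : side) : list game :=
  match s with Empty _ => [] | Opts h hs => h :: hs end.

Definition left_side (g : game) : side := match g with Game l _ => l end.
Definition right_side (g : game) : side := match g with Game _ r => r end.

Fixpoint scores (g : game) : R * R :=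
  match g with
  | Game l r =>
      (match l with
       | Empty s => s
       | Opts h hs => fold_right Rmax (snd (scores h)) (map (fun x => snd (scores x)) hs)
       end,
       match r with
       | Empty s => s
       | Opts h hs => fold_right Rmin (fst (scores h)) (map (fun x => fst (scores x)) hs)
       end)
  end.

Definition Ls (g : game) : R := fst (scores g).
Definition Rs (g : game) : R := snd (scores g).

Definition mk_side (d : R) (l : list game) : side :=
  match l with [] => Empty d | h :: t => Opts h t end.

Definition side_dec (s : side) : R := match s with Empty a => a | Opts _ _ => 0 end.

Fixpoint add (g1 : game) : game -> game :=
  fix add1 (g2 : game) : game :=
    match g1, g2 with
    | Game l1 r1, Game l2 r2 =>
        Game
          (mk_side (side_dec l1 + side_dec l2)
             ((match l1 with Empty _ => [] | Opts h hs => add h g2 :: map (fun x => add x g2) hs end)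
              ++ (match l2 with Empty _ => [] | Opts h hs => add1 h :: map add1 hs end)))
          (mk_side (side_dec r1 + side_dec r2)
             ((match r1 with Empty _ => [] | Opts h hs => add h g2 :: map (fun x => add x g2) hs end)
              ++ (match r2 with Empty _ => [] | Opts h hs => add1 h :: map add1 hs end)))
    end.

Fixpoint nsum (n : nat) (g : game) : game :=
  match n with
  | O => num 0
  | S O => g
  | S m => add g (nsum m g)
  end.

Definition is_option (h g : game) : Prop :=
  In h (side_opts (left_side g)) \/ In h (side_opts (right_side g)).

Inductive position : game -> game -> Prop :=
  | pos_refl g : position g g
  | pos_step k h g : is_option h g -> position k h -> position k g.

Definition has_options (s : side) : Prop := side_opts s <> [].

Definition dicotic (G : game) : Prop :=
  forall H, position H G -> (has_options (left_side H) <-> has_options (right_side H)).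

Definition nonzugzwang (G : game) : Prop :=
  forall H, position H G -> Ls H >= Rs H.

Definition terminals_are_numbers (G : game) : Prop :=
  forall H a b, position H G -> H = Game (Empty a) (Empty b) -> a = b.

Definition is_number (g : game) : bool :=
  match g with
  | Game (Empty a) (Empty b) => if Req_EM_T a b then true else false
  | _ => false
  end.

(** min { t >= 0 : Ls (f t) = Rs (f t) }  (chosen by epsilon; meaningful when the
    minimum exists). *)
Definition min_zero (f : R -> game) : R :=
  epsilon (inhabits 0) (fun t0 => 0 <= t0 /\ Ls (f t0) = Rs (f t0) /\
     forall t, 0 <= t -> Ls (f t) = Rs (f t) -> t0 <= t).

Fixpoint cool (g : game) : R -> game :=
  match g with
  | Game l r =>
      let tl : R -> game := fun s =>
        Game
          (match l with
           | Empty a => Empty a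
           | Opts h hs => Opts (add (cool h s) (num (- s))) (map (fun x => add (cool x s) (num (- s))) hs)
           end)
          (match r with
           | Empty a => Empty a
           | Opts h hs => Opts (add (cool h s) (num s)) (map (fun x => add (cool x s) (num s)) hs)
           end) in
      if is_number g then (fun _ => g)
      else
        let t0 := min_zero tl in
        fun t => if Rle_dec t t0 then tl t else num (Ls (tl t0))
  end.

Definition cool_tilde (g : game) (s : R) : game :=
  match g with
  | Game l r =>
      Game
        (match l with
         | Empty a => Empty a
         | Opts h hs => Opts (add (cool h s) (num (- s))) (map (fun x => add (cool x s) (num (- s))) hs)
         end)
        (match r with
         | Empty a => Empty a
         | Opts h hs => Opts (add (cool h s) (num s)) (map (fun x => add (cool x s) (num s)) hs)
         end)
  end.

Definition temperature (g : game) : R :=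
  if is_number g then 0 else min_zero (cool_tilde g).

(* Main.v *)
Require Import Defs.
From Stdlib Require Import Reals Lra List ClassicalEpsilon Classical Arith Lia.
Import ListNotations.
Open Scope R_scope.
Local Notation num := Defs.num.


Definition side_of (b : bool) (g : game) : side := if b then left_side g else right_side g.
Definition opts b g := side_opts (side_of b g).
Definition dec b g := side_dec (side_of b g).

Fixpoint gsize (g : game) : nat :=
  match g with Game l r => S (ssize l + ssize r) end
with ssize (s : side) : nat :=
  match s with Empty _ => 0%nat | Opts h hs => (gsize h + (fix ls (l : list game) : nat :=
     match l with [] => 0%nat | x :: l' => (gsize x + ls l')%nat end) hs)%nat end.

Lemma opts_size b g x : In x (opts b g) -> (gsize x < gsize g)%nat.
Proof.
  destruct g as [l r]. unfold opts, side_of.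
  assert (H: forall s, In x (side_opts s) -> (gsize x <= ssize s)%nat).
  { intros [a|h hs]; simpl; [tauto|].
    intros [<-|Hin]; [lia|].
    assert (forall l, In x l -> (gsize x <= (fix ls (l : list game) : nat :=
     match l with [] => 0%nat | x :: l' => (gsize x + ls l')%nat end) l)%nat).
    { induction l0; simpl; [tauto|]. intros [<-|H]; [lia|]. specialize (IHl0 H); lia. }
    specialize (H _ Hin); lia. }
  destruct b; simpl; intro Hin; specialize (H _ Hin); lia.
Qed.

Lemma measure_ind {A} (m : A -> nat) (P : A -> Prop) :
  (forall a, (forall b, (m b < m a)%nat -> P b) -> P a) -> forall a, P a.
Proof.
  intros H a. apply (well_founded_ind (Wf_nat.well_founded_ltof A m)). exact H.
Qed.

Lemma fold_max_spec (f : game -> R) h hs :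
  (forall x, In x (h :: hs) -> f x <= fold_right Rmax (f h) (map f hs)) /\
  exists x, In x (h :: hs) /\ fold_right Rmax (f h) (map f hs) = f x.
Proof.
  induction hs as [|y hs IH]; simpl.
  - split; [intros x [<-|[]]; lra| exists h; auto].
  - destruct IH as [IH1 [x [Hx Ex]]]. split.
    + intros z [<-|[<-|Hz]].
      * eapply Rle_trans; [apply IH1; simpl; auto| apply Rmax_r].
      * apply Rmax_l.
      * eapply Rle_trans; [apply IH1; simpl; auto| apply Rmax_r].
    + destruct (Rle_dec (f y) (fold_right Rmax (f h) (map f hs))).
      * rewrite Rmax_right by lra. exists x. simpl in Hx |- *. tauto.
      * rewrite Rmax_left by lra. exists y; simpl; auto.
Qed.

Lemma fold_min_spec (f : game -> R) h hs :
  (forall x, In x (h :: hs) -> fold_right Rmin (f h) (map f hs) <= f x) /\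
  exists x, In x (h :: hs) /\ fold_right Rmin (f h) (map f hs) = f x.
Proof.
  induction hs as [|y hs IH]; simpl.
  - split; [intros x [<-|[]]; lra| exists h; auto].
  - destruct IH as [IH1 [x [Hx Ex]]]. split.
    + intros z [<-|[<-|Hz]].
      * eapply Rle_trans; [apply Rmin_r| apply IH1; simpl; auto].
      * apply Rmin_l.
      * eapply Rle_trans; [apply Rmin_r| apply IH1; simpl; auto].
    + destruct (Rle_dec (f y) (fold_right Rmin (f h) (map f hs))).
      * rewrite Rmin_left by lra. exists y; simpl; auto.
      * rewrite Rmin_right by lra. exists x. simpl in Hx |- *. tauto.
Qed.

Lemma Ls_empty g : opts true g = [] -> Ls g = dec true g.
Proof. destruct g as [[a|h hs] r]; unfold opts, dec; simpl; [reflexivity| discriminate]. Qed.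
Lemma Rs_empty g : opts false g = [] -> Rs g = dec false g.
Proof. destruct g as [l [a|h hs]]; unfold opts, dec; simpl; [reflexivity| discriminate]. Qed.

Lemma Ls_ge g x : In x (opts true g) -> Rs x <= Ls g.
Proof.
  destruct g as [[a|h hs] r]; unfold opts; simpl; [tauto|].
  intro Hx. unfold Ls; simpl. apply (proj1 (fold_max_spec (fun x => snd (scores x)) h hs)). exact Hx.
Qed.
Lemma Rs_le g x : In x (opts false g) -> Rs g <= Ls x.
Proof.
  destruct g as [l [a|h hs]]; unfold opts; simpl; [tauto|].
  intro Hx. unfold Rs; simpl. apply (proj1 (fold_min_spec (fun x => fst (scores x)) h hs)). exact Hx.
Qed.
Lemma Ls_att g : opts true g <> [] -> exists x, In x (opts true g) /\ Ls g = Rs x.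
Proof.
  destruct g as [[a|h hs] r]; unfold opts; simpl; [tauto|].
  intros _. unfold Ls; simpl. apply (proj2 (fold_max_spec (fun x => snd (scores x)) h hs)).
Qed.
Lemma Rs_att g : opts false g <> [] -> exists x, In x (opts false g) /\ Rs g = Ls x.
Proof.
  destruct g as [l [a|h hs]]; unfold opts; simpl; [tauto|].
  intros _. unfold Rs; simpl. apply (proj2 (fold_min_spec (fun x => fst (scores x)) h hs)).
Qed.
Lemma Ls_le_of g M : opts true g <> [] -> (forall x, In x (opts true g) -> Rs x <= M) -> Ls g <= M.
Proof. intros Hne H. destruct (Ls_att g Hne) as [x [Hx ->]]. auto. Qed.
Lemma Rs_ge_of g M : opts false g <> [] -> (forall x, In x (opts false g) -> M <= Ls x) -> M <= Rs g.
Proof. intros Hne H. destruct (Rs_att g Hne) as [x [Hx ->]]. auto. Qed.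

Lemma add_unfold l1 r1 l2 r2 : add (Game l1 r1) (Game l2 r2) =
  Game (mk_side (side_dec l1 + side_dec l2)
          (map (fun x => add x (Game l2 r2)) (side_opts l1) ++ map (add (Game l1 r1)) (side_opts l2)))
       (mk_side (side_dec r1 + side_dec r2)
          (map (fun x => add x (Game l2 r2)) (side_opts r1) ++ map (add (Game l1 r1)) (side_opts r2))).
Proof. destruct l1, l2, r1, r2; reflexivity. Qed.

Lemma side_opts_mk d l : side_opts (mk_side d l) = l.
Proof. destruct l; reflexivity. Qed.

Lemma opts_add b X Y : opts b (add X Y) = map (fun x => add x Y) (opts b X) ++ map (add X) (opts b Y).
Proof.
  destruct X as [l1 r1], Y as [l2 r2]. unfold opts, side_of. rewrite add_unfold.
  destruct b; simpl; apply side_opts_mk.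
Qed.

Lemma dec_add b X Y : opts b X = [] -> opts b Y = [] -> dec b (add X Y) = dec b X + dec b Y.
Proof.
  destruct X as [l1 r1], Y as [l2 r2]. unfold opts, dec, side_of. rewrite add_unfold.
  destruct b; simpl; intros -> ->; reflexivity.
Qed.


Inductive Sim (c : R) : game -> game -> Prop :=
| SimI X Y :
   (forall b, opts b X = [] <-> opts b Y = []) ->
   (forall b, opts b X = [] -> dec b Y = dec b X + c) ->
   (forall b x, In x (opts b X) -> exists y, In y (opts b Y) /\ Sim c x y) ->
   (forall b y, In y (opts b Y) -> exists x, In x (opts b X) /\ Sim c x y) ->
   Sim c X Y.

Lemma nil_dec (l : list game) : l = [] \/ l <> [].
Proof. destruct l; [left; reflexivity| right; discriminate]. Qed.

Lemma Sim_scores c X Y : Sim c X Y -> Ls Y = Ls X + c /\ Rs Y = Rs X + c.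
Proof.
  revert Y. induction X as [X IH] using (measure_ind gsize).
  intros Y HS. inversion HS as [X0 Y0 He Hd Hf Hb]; subst.
  split.
  - destruct (nil_dec (opts true X)) as [E|E].
    + rewrite (Ls_empty X E), (Ls_empty Y (proj1 (He true) E)). apply Hd; exact E.
    + assert (E' : opts true Y <> []) by (intro E'; apply E, (He true); exact E').
      apply Rle_antisym.
      * apply Ls_le_of; auto. intros y Hy. destruct (Hb true y Hy) as [x [Hx Sx]].
        rewrite (proj2 (IH x (opts_size _ _ _ Hx) y Sx)). pose proof (Ls_ge X x Hx). lra.
      * destruct (Ls_att X E) as [x [Hx ->]]. destruct (Hf true x Hx) as [y [Hy Sy]].
        rewrite <- (proj2 (IH x (opts_size _ _ _ Hx) y Sy)). apply Ls_ge; auto.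
  - destruct (nil_dec (opts false X)) as [E|E].
    + rewrite (Rs_empty X E), (Rs_empty Y (proj1 (He false) E)). apply Hd; exact E.
    + assert (E' : opts false Y <> []) by (intro E'; apply E, (He false); exact E').
      apply Rle_antisym.
      * destruct (Rs_att X E) as [x [Hx ->]]. destruct (Hf false x Hx) as [y [Hy Sy]].
        rewrite <- (proj1 (IH x (opts_size _ _ _ Hx) y Sy)). apply Rs_le; auto.
      * apply Rs_ge_of; auto. intros y Hy. destruct (Hb false y Hy) as [x [Hx Sx]].
        rewrite (proj1 (IH x (opts_size _ _ _ Hx) y Sx)). pose proof (Rs_le X x Hx). lra.
Qed.

Lemma Sim_refl X : Sim 0 X X.
Proof.
  induction X as [X IH] using (measure_ind gsize).
  constructor.
  - tauto.
  - intros; lra.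
  - intros b x Hx. exists x. split; auto. apply IH. eapply opts_size; eauto.
  - intros b x Hx. exists x. split; auto. apply IH. eapply opts_size; eauto.
Qed.

Lemma Sim_sym c X Y : Sim c X Y -> Sim (-c) Y X.
Proof.
  revert Y. induction X as [X IH] using (measure_ind gsize).
  intros Y HS. inversion HS as [X0 Y0 He Hd Hf Hb]; subst.
  constructor.
  - intro b; specialize (He b); tauto.
  - intros b E. rewrite (Hd b (proj2 (He b) E)). lra.
  - intros b y Hy. destruct (Hb b y Hy) as [x [Hx Sx]]. exists x. split; auto.
    apply IH; auto. eapply opts_size; eauto.
  - intros b x Hx. destruct (Hf b x Hx) as [y [Hy Sy]]. exists y. split; auto.
    apply IH; auto. eapply opts_size; eauto.
Qed.

Lemma Sim_trans c1 c2 X Y Z : Sim c1 X Y -> Sim c2 Y Z -> Sim (c1 + c2) X Z.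
Proof.
  revert Y Z. induction X as [X IH] using (measure_ind gsize).
  intros Y Z H1 H2. inversion H1 as [X0 Y0 He Hd Hf Hb]; subst.
  inversion H2 as [X1 Y1 He' Hd' Hf' Hb']; subst.
  constructor.
  - intro b; specialize (He b); specialize (He' b); tauto.
  - intros b E. rewrite (Hd' b (proj1 (He b) E)), (Hd b E). lra.
  - intros b x Hx. destruct (Hf b x Hx) as [y [Hy Sy]]. destruct (Hf' b y Hy) as [z [Hz Sz]].
    exists z. split; auto. eapply IH; eauto. eapply opts_size; eauto.
  - intros b z Hz. destruct (Hb' b z Hz) as [y [Hy Sy]]. destruct (Hb b y Hy) as [x [Hx Sx]].
    exists x. split; auto. eapply IH; eauto. eapply opts_size; eauto.
Qed.

Lemma Sim_eq c c' X Y : c = c' -> Sim c X Y -> Sim c' X Y.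
Proof. intros ->; auto. Qed.

Lemma in_opts_add b X Y z : In z (opts b (add X Y)) <->
  (exists x, In x (opts b X) /\ z = add x Y) \/ (exists y, In y (opts b Y) /\ z = add X y).
Proof.
  rewrite opts_add, in_app_iff, !in_map_iff.
  split; intros [[w [E H]]|[w [E H]]]; [left|right|left|right]; exists w; auto.
Qed.

Lemma opts_add_nil b X Y : opts b (add X Y) = [] <-> opts b X = [] /\ opts b Y = [].
Proof.
  rewrite opts_add. split.
  - intro E. apply app_eq_nil in E. destruct E as [E1 E2].
    split; [destruct (opts b X)|destruct (opts b Y)]; simpl in *; congruence.
  - intros [-> ->]. reflexivity.
Qed.

Definition sz2 (p : game * game) := (gsize (fst p) + gsize (snd p))%nat.

Lemma Sim_add c1 c2 X1 X2 Y1 Y2 : Sim c1 X1 Y1 -> Sim c2 X2 Y2 -> Sim (c1 + c2) (add X1 X2) (add Y1 Y2).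
Proof.
  intros H1 H2.
  pose (p := (X1, X2)). change X1 with (fst p) in H1 |- *. change X2 with (snd p) in H2 |- *.
  clearbody p. revert Y1 Y2 H1 H2.
  induction p as [[A B] IH] using (measure_ind sz2). simpl.
  intros Y1 Y2 H1 H2.
  inversion H1 as [X0 Y0 He Hd Hf Hb]; subst.
  inversion H2 as [X3 Y3 He' Hd' Hf' Hb']; subst.
  constructor.
  - intro b. rewrite !opts_add_nil. specialize (He b); specialize (He' b); tauto.
  - intros b E. apply opts_add_nil in E. destruct E as [E1 E2].
    rewrite !dec_add; auto. rewrite (Hd b E1), (Hd' b E2). lra.
    apply He; auto. apply He'; auto.
  - intros b z Hz. apply in_opts_add in Hz. destruct Hz as [[x [Hx ->]]|[x [Hx ->]]].
    + destruct (Hf b x Hx) as [y [Hy Sy]]. exists (add y Y2). split.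
      * apply in_opts_add. left; eauto.
      * apply (IH (x, B)); auto. unfold sz2; simpl. pose proof (opts_size _ _ _ Hx). lia.
    + destruct (Hf' b x Hx) as [y [Hy Sy]]. exists (add Y1 y). split.
      * apply in_opts_add. right; eauto.
      * apply (IH (A, x)); auto. unfold sz2; simpl. pose proof (opts_size _ _ _ Hx). lia.
  - intros b z Hz. apply in_opts_add in Hz. destruct Hz as [[y [Hy ->]]|[y [Hy ->]]].
    + destruct (Hb b y Hy) as [x [Hx Sx]]. exists (add x B). split.
      * apply in_opts_add. left; eauto.
      * apply (IH (x, B)); auto. unfold sz2; simpl. pose proof (opts_size _ _ _ Hx). lia.
    + destruct (Hb' b y Hy) as [x [Hx Sx]]. exists (add A x). split.
      * apply in_opts_add. right; eauto.
      * apply (IH (A, x)); auto. unfold sz2; simpl. pose proof (opts_size _ _ _ Hx). lia.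
Qed.

Definition numlike (A : game) (a : R) := forall b, opts b A = [] /\ dec b A = a.

Lemma numlike_num a : numlike (num a) a.
Proof. intro b; destruct b; split; reflexivity. Qed.

Lemma Sim_numl A a B : numlike A a -> Sim a B (add A B).
Proof.
  intro HA. induction B as [B IH] using (measure_ind gsize).
  constructor.
  - intro b. rewrite opts_add_nil. destruct (HA b). tauto.
  - intros b E. rewrite dec_add; auto. destruct (HA b) as [_ ->]. lra. apply HA.
  - intros b x Hx. exists (add A x). split.
    + apply in_opts_add; right; eauto.
    + apply IH. eapply opts_size; eauto.
  - intros b z Hz. apply in_opts_add in Hz. destruct Hz as [[x [Hx ->]]|[x [Hx ->]]].
    + destruct (HA b) as [E _]. rewrite E in Hx. destruct Hx.
    + exists x. split; auto. apply IH. eapply opts_size; eauto.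
Qed.

Lemma Sim_numr A a B : numlike A a -> Sim a B (add B A).
Proof.
  intro HA. induction B as [B IH] using (measure_ind gsize).
  constructor.
  - intro b. rewrite opts_add_nil. destruct (HA b). tauto.
  - intros b E. rewrite dec_add; auto. destruct (HA b) as [_ ->]. lra. apply HA.
  - intros b x Hx. exists (add x A). split.
    + apply in_opts_add; left; eauto.
    + apply IH. eapply opts_size; eauto.
  - intros b z Hz. apply in_opts_add in Hz. destruct Hz as [[x [Hx ->]]|[x [Hx ->]]].
    + exists x. split; auto. apply IH. eapply opts_size; eauto.
    + destruct (HA b) as [E _]. rewrite E in Hx. destruct Hx.
Qed.

Lemma Sim_shift c X : Sim c X (add X (num c)).
Proof. apply Sim_numr, numlike_num. Qed.

Definition sz3 (p : game * game * game) := (gsize (fst (fst p)) + gsize (snd (fst p)) + gsize (snd p))%nat.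

Lemma Sim_swap x a r : Sim 0 (add x (add a r)) (add a (add x r)).
Proof.
  pose (p := (x, a, r)). change x with (fst (fst p)). change a with (snd (fst p)).
  change r with (snd p). clearbody p.
  induction p as [[[X A] Rr] IH] using (measure_ind sz3). simpl.
  constructor.
  - intro b. rewrite !opts_add_nil. tauto.
  - intros b E. rewrite !opts_add_nil in E. destruct E as [E1 [E2 E3]].
    rewrite !dec_add; auto; try (apply opts_add_nil; auto). lra.
  - intros b z Hz. rewrite in_opts_add in Hz. destruct Hz as [[x' [Hx ->]]|[y [Hy ->]]].
    + exists (add A (add x' Rr)). split.
      * apply in_opts_add; right. exists (add x' Rr); split; auto. apply in_opts_add; left; eauto.
      * apply (IH (x', A, Rr)). unfold sz3; simpl. pose proof (opts_size _ _ _ Hx). lia.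
    + rewrite in_opts_add in Hy. destruct Hy as [[a' [Ha ->]]|[r' [Hr ->]]].
      * exists (add a' (add X Rr)). split.
        -- apply in_opts_add; left; eauto.
        -- apply (IH (X, a', Rr)). unfold sz3; simpl. pose proof (opts_size _ _ _ Ha). lia.
      * exists (add A (add X r')). split.
        -- apply in_opts_add; right. exists (add X r'); split; auto. apply in_opts_add; right; eauto.
        -- apply (IH (X, A, r')). unfold sz3; simpl. pose proof (opts_size _ _ _ Hr). lia.
  - intros b z Hz. rewrite in_opts_add in Hz. destruct Hz as [[a' [Ha ->]]|[y [Hy ->]]].
    + exists (add X (add a' Rr)). split.
      * apply in_opts_add; right. exists (add a' Rr); split; auto. apply in_opts_add; left; eauto.
      * apply (IH (X, a', Rr)). unfold sz3; simpl. pose proof (opts_size _ _ _ Ha). lia.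
    + rewrite in_opts_add in Hy. destruct Hy as [[x' [Hx ->]]|[r' [Hr ->]]].
      * exists (add x' (add A Rr)). split.
        -- apply in_opts_add; left; eauto.
        -- apply (IH (x', A, Rr)). unfold sz3; simpl. pose proof (opts_size _ _ _ Hx). lia.
      * exists (add X (add A r')). split.
        -- apply in_opts_add; right. exists (add A r'); split; auto. apply in_opts_add; right; eauto.
        -- apply (IH (X, A, r')). unfold sz3; simpl. pose proof (opts_size _ _ _ Hr). lia.
Qed.


Definition topgood H := (opts true H = [] <-> opts false H = []) /\ Rs H <= Ls H /\
  (opts true H = [] -> dec true H = dec false H).
Definition good X := forall H, position H X -> topgood H.

Lemma position_trans k h g : position k h -> position h g -> position k g.
Proof. intros H1 H2. induction H2; auto. eapply pos_step; eauto. Qed.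

Lemma opt_position b x X : In x (opts b X) -> position x X.
Proof.
  intro Hx. eapply pos_step; [|apply pos_refl]. unfold is_option.
  destruct b; [left|right]; exact Hx.
Qed.

Lemma good_opt b x X : good X -> In x (opts b X) -> good x.
Proof. intros HX Hx H Hp. apply HX. eapply position_trans; eauto. eapply opt_position; eauto. Qed.

Lemma good_top X : good X -> topgood X.
Proof. intro H; apply H, pos_refl. Qed.

Lemma good_numlike X : good X -> opts true X = [] -> numlike X (dec true X).
Proof.
  intros HX E. destruct (good_top X HX) as [H1 [_ H3]].
  intros [|]; split; auto. apply H1; auto. symmetry; auto.
Qed.
Lemma good_numlike' X : good X -> opts false X = [] -> numlike X (dec true X).
Proof.
  intros HX E. apply good_numlike; auto. apply (proj1 (good_top X HX)); auto.
Qed.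

Lemma position_add H A B : position H (add A B) ->
  exists A' B', position A' A /\ position B' B /\ H = add A' B'.
Proof.
  intro Hp. remember (add A B) as g eqn:Eg. revert A B Eg.
  induction Hp as [g|k h g Ho Hp IH]; intros A B Eg.
  - exists A, B. repeat split; auto using pos_refl.
  - assert (Hh : exists b, In h (opts b g)) by (destruct Ho; [exists true|exists false]; auto).
    destruct Hh as [b Hh]. subst g. apply in_opts_add in Hh.
    destruct Hh as [[x [Hx ->]]|[y [Hy ->]]].
    + destruct (IH x B eq_refl) as [A' [B' [H1 [H2 ->]]]].
      exists A', B'. repeat split; auto. eapply position_trans; eauto. eapply opt_position; eauto.
    + destruct (IH A y eq_refl) as [A' [B' [H1 [H2 ->]]]].
      exists A', B'. repeat split; auto. eapply position_trans; eauto. eapply opt_position; eauto.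
Qed.

Definition milnor A B :=
  Ls (add A B) <= Ls A + Ls B /\ Rs A + Rs B <= Rs (add A B) /\
  Rs (add A B) <= Rs A + Ls B /\ Rs (add A B) <= Ls A + Rs B /\
  Rs A + Ls B <= Ls (add A B) /\ Ls A + Rs B <= Ls (add A B).

Lemma Milnor A B : good A -> good B -> milnor A B.
Proof.
  pose (p := (A, B)). change A with (fst p). change B with (snd p). clearbody p. clear A B.
  induction p as [[A B] IH] using (measure_ind sz2). simpl.
  intros GA GB.
  assert (IHx : forall b x, In x (opts b A) -> milnor x B).
  { intros b x Hx. assert (Hlt: (sz2 (x, B) < sz2 (A, B))%nat) by (unfold sz2; simpl; pose proof (opts_size _ _ _ Hx); lia).
    apply (IH (x, B) Hlt); simpl; [exact (good_opt _ _ _ GA Hx)|auto]. }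
  assert (IHy : forall b y, In y (opts b B) -> milnor A y).
  { intros b y Hy. assert (Hlt: (sz2 (A, y) < sz2 (A, B))%nat) by (unfold sz2; simpl; pose proof (opts_size _ _ _ Hy); lia).
    apply (IH (A, y) Hlt); simpl; [auto|exact (good_opt _ _ _ GB Hy)]. }
  destruct (good_top A GA) as [GA1 [GA2 GA3]].
  destruct (good_top B GB) as [GB1 [GB2 GB3]].
  assert (Hi : Ls (add A B) <= Ls A + Ls B).
  { destruct (nil_dec (opts true (add A B))) as [E|E].
    - rewrite (Ls_empty (add A B)) by auto. apply opts_add_nil in E. destruct E as [E1 E2].
      rewrite dec_add, (Ls_empty A), (Ls_empty B) by auto. lra.
    - apply Ls_le_of; auto. intros z Hz. apply in_opts_add in Hz.
      destruct Hz as [[x [Hx ->]]|[y [Hy ->]]].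
      + destruct (IHx _ _ Hx) as [_ [_ [h _]]]. pose proof (Ls_ge A x Hx). lra.
      + destruct (IHy _ _ Hy) as [_ [_ [_ [h _]]]]. pose proof (Ls_ge B y Hy). lra. }
  assert (Hi' : Rs A + Rs B <= Rs (add A B)).
  { destruct (nil_dec (opts false (add A B))) as [E|E].
    - rewrite (Rs_empty (add A B)) by auto. apply opts_add_nil in E. destruct E as [E1 E2].
      rewrite dec_add, (Rs_empty A), (Rs_empty B) by auto. lra.
    - apply Rs_ge_of; auto. intros z Hz. apply in_opts_add in Hz.
      destruct Hz as [[x [Hx ->]]|[y [Hy ->]]].
      + destruct (IHx _ _ Hx) as [_ [_ [_ [_ [_ h]]]]]. pose proof (Rs_le A x Hx). lra.
      + destruct (IHy _ _ Hy) as [_ [_ [_ [_ [h _]]]]]. pose proof (Rs_le B y Hy). lra. }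
  unfold milnor. split; [exact Hi|]. split; [exact Hi'|].
  split; [|split; [|split]].
  - destruct (nil_dec (opts false A)) as [E|E].
    + pose proof (good_numlike' A GA E) as HN.
      rewrite (proj2 (Sim_scores _ _ _ (Sim_numl _ _ B HN))).
      rewrite (Rs_empty A E). rewrite <- (proj2 (HN false)). lra.
    + destruct (Rs_att A E) as [x [Hx ->]].
      assert (Hz : In (add x B) (opts false (add A B))) by (apply in_opts_add; left; eauto).
      pose proof (Rs_le _ _ Hz). destruct (IHx _ _ Hx) as [h _]. lra.
  - destruct (nil_dec (opts false B)) as [E|E].
    + pose proof (good_numlike' B GB E) as HN.
      rewrite (proj2 (Sim_scores _ _ _ (Sim_numr _ _ A HN))).
      rewrite (Rs_empty B E). rewrite <- (proj2 (HN false)). lra.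
    + destruct (Rs_att B E) as [y [Hy ->]].
      assert (Hz : In (add A y) (opts false (add A B))) by (apply in_opts_add; right; eauto).
      pose proof (Rs_le _ _ Hz). destruct (IHy _ _ Hy) as [h _]. lra.
  - destruct (nil_dec (opts true B)) as [E|E].
    + pose proof (good_numlike B GB E) as HN.
      rewrite (proj1 (Sim_scores _ _ _ (Sim_numr _ _ A HN))).
      rewrite (Ls_empty B E). lra.
    + destruct (Ls_att B E) as [y [Hy ->]].
      assert (Hz : In (add A y) (opts true (add A B))) by (apply in_opts_add; right; eauto).
      pose proof (Ls_ge _ _ Hz). destruct (IHy _ _ Hy) as [_ [h _]]. lra.
  - destruct (nil_dec (opts true A)) as [E|E].
    + pose proof (good_numlike A GA E) as HN.
      rewrite (proj1 (Sim_scores _ _ _ (Sim_numl _ _ B HN))).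
      rewrite (Ls_empty A E). lra.
    + destruct (Ls_att A E) as [x [Hx ->]].
      assert (Hz : In (add x B) (opts true (add A B))) by (apply in_opts_add; left; eauto).
      pose proof (Ls_ge _ _ Hz). destruct (IHx _ _ Hx) as [_ [h _]]. lra.
Qed.

Lemma good_add A B : good A -> good B -> good (add A B).
Proof.
  intros GA GB H Hp. destruct (position_add _ _ _ Hp) as [A' [B' [H1 [H2 ->]]]].
  assert (GA' : good A') by (intros K HK; apply GA; eapply position_trans; eauto).
  assert (GB' : good B') by (intros K HK; apply GB; eapply position_trans; eauto).
  destruct (Milnor A' B' GA' GB') as [_ [_ [h1 [_ [h2 _]]]]].
  destruct (good_top A' GA') as [a1 [a2 a3]]. destruct (good_top B' GB') as [b1 [b2 b3]].
  split; [|split].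
  - rewrite !opts_add_nil. tauto.
  - lra.
  - intro E. pose proof E as E'. apply opts_add_nil in E'. destruct E' as [E1 E2].
    rewrite !dec_add; auto; try tauto. rewrite a3, b3 by auto. reflexivity.
Qed.

Lemma good_num a : good (num a).
Proof.
  intros H Hp. inversion Hp; subst.
  - split; [|split]; unfold Ls, Rs; simpl; try tauto; try lra.
  - destruct H0 as [[]|[]].
Qed.


Lemma min_zero_exists (Lf Rf : R -> R) :
 (forall s t, 0 <= s <= t -> Lf t <= Lf s <= Lf t + (t - s)) ->
 (forall s t, 0 <= s <= t -> Rf s <= Rf t <= Rf s + (t - s)) ->
 Rf 0 <= Lf 0 -> (exists T, 0 <= T /\ Lf T < Rf T) ->
 exists t0, 0 <= t0 /\ Lf t0 = Rf t0 /\ forall t, 0 <= t -> Lf t = Rf t -> t0 <= t.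
Proof.
  intros HL HR H0 [T [HT0 HT]].
  destruct (Req_dec (Lf 0) (Rf 0)) as [E0|E0].
  { exists 0. split; [lra|split; auto]. }
  set (E := fun t => 0 <= t /\ Rf t < Lf t).
  assert (HE0 : E 0) by (split; lra).
  assert (HEb : forall t, E t -> t <= T).
  { intros t [Ht Hf]. destruct (Rle_dec t T) as [|Hn]; auto.
    specialize (HL T t ltac:(lra)). specialize (HR T t ltac:(lra)). lra. }
  destruct (completeness E) as [a [Hub Hlub]].
  { exists T. intros t Ht. apply HEb; auto. }
  { exists 0; auto. }
  assert (Ha0 : 0 <= a) by (apply Hub; auto).
  assert (NUB : forall b, b < a -> exists t, E t /\ b < t).
  { intros b Hb. apply NNPP. intro Hn. assert (a <= b); [|lra].
    apply Hlub. intros t Ht. destruct (Rle_dec t b); auto. exfalso; apply Hn; exists t; split; auto; lra. }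
  exists a. split; auto. split.
  - destruct (Rtotal_order (Lf a) (Rf a)) as [Hlt|[Heq|Hgt]]; auto; exfalso.
    + set (e := (Rf a - Lf a) / 4).
      destruct (NUB (a - e) ltac:(unfold e; lra)) as [t [[Ht0 Ht] Hgt]].
      assert (t <= a) by (apply Hub; split; auto).
      specialize (HL t a ltac:(lra)). specialize (HR t a ltac:(lra)). unfold e in *. lra.
    + set (e := (Lf a - Rf a) / 4).
      assert (E (a + e)).
      { split; [unfold e; lra|]. specialize (HL a (a + e) ltac:(unfold e; lra)).
        specialize (HR a (a + e) ltac:(unfold e; lra)). unfold e in *. lra. }
      assert (a + e <= a) by (apply Hub; auto). unfold e in *; lra.
  - intros t Ht Hf. destruct (Rle_dec a t) as [|Hn]; auto. exfalso.
    destruct (NUB t ltac:(lra)) as [u [[Hu0 Hu] Htu]].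
    specialize (HL t u ltac:(lra)). specialize (HR t u ltac:(lra)). lra.
Qed.

Lemma cool_eq X t : cool X t = if is_number X then X else
  if Rle_dec t (temperature X) then cool_tilde X t else num (Ls (cool_tilde X (temperature X))).
Proof.
  destruct X as [l r]. unfold temperature.
  change (cool (Game l r)) with (if is_number (Game l r) then (fun _ => Game l r) else
    (fun t => if Rle_dec t (min_zero (cool_tilde (Game l r))) then cool_tilde (Game l r) t
      else num (Ls (cool_tilde (Game l r) (min_zero (cool_tilde (Game l r))))))).
  destruct (is_number (Game l r)); reflexivity.
Qed.

Lemma opts_tl_L X s : opts true (cool_tilde X s) = map (fun x => add (cool x s) (num (-s))) (opts true X).
Proof. destruct X as [[a|h hs] r]; reflexivity. Qed.
Lemma opts_tl_R X s : opts false (cool_tilde X s) = map (fun x => add (cool x s) (num s)) (opts false X).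
Proof. destruct X as [l [a|h hs]]; reflexivity. Qed.

Lemma is_number_spec X : is_number X = true -> (forall b, opts b X = []) /\ dec true X = dec false X.
Proof.
  destruct X as [[a|h hs] [b|h' hs']]; simpl; try discriminate.
  destruct (Req_EM_T a b); try discriminate. intros _. split; [intros [|]; reflexivity| exact e].
Qed.

Lemma good_nonnum X : good X -> is_number X = false -> opts true X <> [] /\ opts false X <> [].
Proof.
  intros GX Hn. destruct (good_top X GX) as [H1 [_ H3]].
  assert (opts true X <> []).
  { intro E. pose proof (H3 E) as Ed. pose proof (proj1 H1 E) as E'.
    destruct X as [[a|h hs] [b|h' hs']]; unfold opts, dec in *; simpl in *; try discriminate.
    destruct (Req_EM_T a b); [discriminate| contradiction]. }
  split; auto. intro E; apply H, H1, E.
Qed.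

Lemma temperature_nonneg_of X : (is_number X = false -> 0 <= temperature X) -> 0 <= temperature X.
Proof. unfold temperature. destruct (is_number X); auto; lra. Qed.

Definition tspec (X : game) (t0 : R) := 0 <= t0 /\ Ls (cool_tilde X t0) = Rs (cool_tilde X t0) /\
     forall t, 0 <= t -> Ls (cool_tilde X t) = Rs (cool_tilde X t) -> t0 <= t.

Lemma temperature_spec X : is_number X = false ->
  (exists t0, tspec X t0) -> tspec X (temperature X).
Proof.
  intros Hn Hex. unfold temperature. rewrite Hn. unfold min_zero.
  apply (epsilon_spec (inhabits 0) (fun t0 => 0 <= t0 /\ Ls (cool_tilde X t0) = Rs (cool_tilde X t0) /\
     forall t, 0 <= t -> Ls (cool_tilde X t) = Rs (cool_tilde X t) -> t0 <= t)).
  exact Hex.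
Qed.

Definition slopes (F : R -> game) := forall s t, 0 <= s <= t ->
  (Ls (F t) <= Ls (F s) <= Ls (F t) + (t - s)) /\ (Rs (F s) <= Rs (F t) <= Rs (F s) + (t - s)).

Definition coolok X :=
  slopes (cool X) /\
  (forall t, 0 <= t -> Rs (cool X t) <= Ls (cool X t)) /\
  Ls (cool X 0) = Ls X /\ Rs (cool X 0) = Rs X /\
  (exists v, forall t, 0 <= t -> Rs (cool X t) <= v <= Ls (cool X t)) /\
  (is_number X = false -> tspec X (temperature X)).

Lemma list_unif (P : game -> R -> Prop) :
  (forall x v w, P x v -> v <= w -> P x w) -> forall l,
  (forall x, In x l -> exists v, P x v) -> exists V, forall x, In x l -> P x V.
Proof.
  intros Hm l. induction l as [|y l IH]; intros H.
  - exists 0. intros x [].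
  - destruct IH as [V HV]. { intros x Hx; apply H; simpl; auto. }
    destruct (H y (or_introl eq_refl)) as [w Hw].
    exists (Rmax V w). intros x [<-|Hx].
    + eapply Hm; eauto. apply Rmax_r.
    + eapply Hm; eauto. apply Rmax_l.
Qed.

Lemma Rs_shift Y c : Rs (add Y (num c)) = Rs Y + c.
Proof. apply (Sim_scores _ _ _ (Sim_shift c Y)). Qed.
Lemma Ls_shift Y c : Ls (add Y (num c)) = Ls Y + c.
Proof. apply (Sim_scores _ _ _ (Sim_shift c Y)). Qed.

Lemma Ls_num v : Ls (num v) = v.
Proof. reflexivity. Qed.
Lemma Rs_num v : Rs (num v) = v.
Proof. reflexivity. Qed.


Lemma tlL_ge X x t : In x (opts true X) -> Rs (cool x t) - t <= Ls (cool_tilde X t).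
Proof.
  intro Hx. assert (Hy : In (add (cool x t) (num (-t))) (opts true (cool_tilde X t))).
  { rewrite opts_tl_L. apply in_map_iff. eauto. }
  pose proof (Ls_ge _ _ Hy). rewrite Rs_shift in H. lra.
Qed.
Lemma tlL_att X (HL : opts true X <> []) t : exists x, In x (opts true X) /\ Ls (cool_tilde X t) = Rs (cool x t) - t.
Proof.
  assert (Hne : opts true (cool_tilde X t) <> []).
  { rewrite opts_tl_L. destruct (opts true X); [congruence|discriminate]. }
  destruct (Ls_att _ Hne) as [y [Hy ->]]. rewrite opts_tl_L in Hy.
  apply in_map_iff in Hy. destruct Hy as [x [<- Hx]]. exists x. split; auto.
  rewrite Rs_shift. lra.
Qed.
Lemma tlR_le X x t : In x (opts false X) -> Rs (cool_tilde X t) <= Ls (cool x t) + t.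
Proof.
  intro Hx. assert (Hy : In (add (cool x t) (num t)) (opts false (cool_tilde X t))).
  { rewrite opts_tl_R. apply in_map_iff. eauto. }
  pose proof (Rs_le _ _ Hy). rewrite Ls_shift in H. lra.
Qed.
Lemma tlR_att X (HR : opts false X <> []) t : exists x, In x (opts false X) /\ Rs (cool_tilde X t) = Ls (cool x t) + t.
Proof.
  assert (Hne : opts false (cool_tilde X t) <> []).
  { rewrite opts_tl_R. destruct (opts false X); [congruence|discriminate]. }
  destruct (Rs_att _ Hne) as [y [Hy ->]]. rewrite opts_tl_R in Hy.
  apply in_map_iff in Hy. destruct Hy as [x [<- Hx]]. exists x. split; auto.
  rewrite Ls_shift. lra.
Qed.

Lemma tl_slopes X (HL : opts true X <> []) (HR : opts false X <> []) (IHo : forall b x, In x (opts b X) -> coolok x) : slopes (cool_tilde X).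
Proof.
  intros s t Hst. split; split.
  - destruct (tlL_att X HL t) as [x [Hx E]]. rewrite E.
    destruct (IHo _ _ Hx) as [Sx _]. destruct (Sx s t Hst) as [_ [h1 h2]].
    pose proof (tlL_ge X x s Hx). lra.
  - destruct (tlL_att X HL s) as [x [Hx E]]. rewrite E.
    destruct (IHo _ _ Hx) as [Sx _]. destruct (Sx s t Hst) as [_ [h1 h2]].
    pose proof (tlL_ge X x t Hx). lra.
  - destruct (tlR_att X HR t) as [x [Hx E]]. rewrite E.
    destruct (IHo _ _ Hx) as [Sx _]. destruct (Sx s t Hst) as [[h1 h2] _].
    pose proof (tlR_le X x s Hx). lra.
  - destruct (tlR_att X HR s) as [x [Hx E]]. rewrite E.
    destruct (IHo _ _ Hx) as [Sx _]. destruct (Sx s t Hst) as [[h1 h2] _].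
    pose proof (tlR_le X x t Hx). lra.
Qed.

Lemma tl_zero X (HL : opts true X <> []) (HR : opts false X <> []) (IHo : forall b x, In x (opts b X) -> coolok x) : Ls (cool_tilde X 0) = Ls X /\ Rs (cool_tilde X 0) = Rs X.
Proof.
  split; apply Rle_antisym.
  - destruct (tlL_att X HL 0) as [x [Hx ->]]. destruct (IHo _ _ Hx) as [_ [_ [_ [h _]]]].
    rewrite h. pose proof (Ls_ge _ _ Hx). lra.
  - destruct (Ls_att X HL) as [x [Hx ->]]. destruct (IHo _ _ Hx) as [_ [_ [_ [h _]]]].
    pose proof (tlL_ge X x 0 Hx). rewrite h in H. lra.
  - destruct (Rs_att X HR) as [x [Hx ->]]. destruct (IHo _ _ Hx) as [_ [_ [h _]]].
    pose proof (tlR_le X x 0 Hx). rewrite h in H. lra.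
  - destruct (tlR_att X HR 0) as [x [Hx ->]]. destruct (IHo _ _ Hx) as [_ [_ [h _]]].
    rewrite h. pose proof (Rs_le _ _ Hx). lra.
Qed.

Lemma tl_eventually X (HL : opts true X <> []) (HR : opts false X <> []) (IHo : forall b x, In x (opts b X) -> coolok x) : exists T, 0 <= T /\ Ls (cool_tilde X T) < Rs (cool_tilde X T).
Proof.
  destruct (list_unif (fun x V => forall t, 0 <= t -> Rs (cool x t) <= V)) with (l := opts true X)
    as [VL HVL].
  { intros x v w H1 H2 t Ht. specialize (H1 t Ht). lra. }
  { intros x Hx. destruct (IHo _ _ Hx) as [_ [_ [_ [_ [[v Hv] _]]]]]. exists v. intros t Ht. apply Hv; auto. }
  destruct (list_unif (fun x V => forall t, 0 <= t -> - V <= Ls (cool x t))) with (l := opts false X)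
    as [VR HVR].
  { intros x v w H1 H2 t Ht. specialize (H1 t Ht). lra. }
  { intros x Hx. destruct (IHo _ _ Hx) as [_ [_ [_ [_ [[v Hv] _]]]]]. exists (- v). intros t Ht.
    specialize (Hv t Ht). lra. }
  set (T := Rabs VL + Rabs VR + 1).
  assert (0 <= T) by (unfold T; pose proof (Rabs_pos VL); pose proof (Rabs_pos VR); lra).
  exists T. split; auto.
  destruct (tlL_att X HL T) as [x [Hx ->]]. destruct (tlR_att X HR T) as [y [Hy ->]].
  specialize (HVL x Hx T H). specialize (HVR y Hy T H).
  pose proof (Rle_abs VL). pose proof (Rle_abs VR). pose proof (Rabs_pos VL). pose proof (Rabs_pos VR).
  unfold T in *. lra.
Qed.


Lemma coolok_all X : good X -> coolok X.
Proof.
  induction X as [X IH] using (measure_ind gsize). intro GX.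
  assert (IHo : forall b x, In x (opts b X) -> coolok x).
  { intros b x Hx. apply IH; [eapply opts_size; eauto| eapply good_opt; eauto]. }
  destruct (good_top X GX) as [G1 [G2 G3]].
  destruct (is_number X) eqn:HN.
  - assert (E : forall t, cool X t = X) by (intro t; rewrite cool_eq, HN; reflexivity).
    split; [|split; [|split; [|split; [|split]]]].
    + intros s t Hst. rewrite !E. lra.
    + intros t _. rewrite E. auto.
    + rewrite E; auto.
    + rewrite E; auto.
    + exists (Ls X). intros t _. rewrite E. lra.
    + intro Hc; congruence.
  - destruct (good_nonnum X GX HN) as [HL HR].
    pose proof (tl_slopes X HL HR IHo) as TS.
    destruct (tl_zero X HL HR IHo) as [Z1 Z2].
    assert (TSP : tspec X (temperature X)).
    { apply temperature_spec; auto.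
      destruct (min_zero_exists (fun t => Ls (cool_tilde X t)) (fun t => Rs (cool_tilde X t))) as [t0 Ht0].
      - intros s t Hst. apply (TS s t Hst).
      - intros s t Hst. apply (TS s t Hst).
      - rewrite Z1, Z2. auto.
      - apply tl_eventually; auto.
      - exists t0. exact Ht0. }
    set (t0 := temperature X) in *.
    destruct TSP as [T0 [T1 T2]].
    set (v := Ls (cool_tilde X t0)) in *.
    assert (E : forall t, cool X t = if Rle_dec t t0 then cool_tilde X t else num v).
    { intro t. rewrite cool_eq, HN. reflexivity. }
    assert (Lb : forall t, 0 <= t <= t0 -> v <= Ls (cool_tilde X t) /\ Rs (cool_tilde X t) <= v).
    { intros t Ht. destruct (TS t t0 Ht) as [[a1 a2] [b1 b2]]. unfold v in *. lra. }
    split; [|split; [|split; [|split; [|split]]]].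
    + intros s t Hst. rewrite !E.
      destruct (Rle_dec t t0); destruct (Rle_dec s t0); try lra.
      * apply TS; auto.
      * rewrite Ls_num, Rs_num. destruct (TS s t0 ltac:(lra)) as [[a1 a2] [b1 b2]].
        unfold v in *. lra.
    + intros t Ht. rewrite E. destruct (Rle_dec t t0).
      * destruct (Lb t ltac:(lra)). lra.
      * rewrite Ls_num, Rs_num. lra.
    + rewrite E. destruct (Rle_dec 0 t0); [auto|lra].
    + rewrite E. destruct (Rle_dec 0 t0); [auto|lra].
    + exists v. intros t Ht. rewrite E. destruct (Rle_dec t t0).
      * destruct (Lb t ltac:(lra)). lra.
      * rewrite Ls_num, Rs_num. lra.
    + intros _. split; auto.
Qed.


Lemma temperature_nonneg X : good X -> 0 <= temperature X.
Proof.
  intro GX. apply temperature_nonneg_of. intro HN.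
  destruct (coolok_all X GX) as [_ [_ [_ [_ [_ H]]]]]. apply (H HN).
Qed.

Definition val X := Ls (cool X (temperature X)).

Lemma cool_number X t : is_number X = true -> cool X t = X.
Proof. intro HN. rewrite cool_eq, HN. reflexivity. Qed.

Lemma cool_live X t : is_number X = false -> t <= temperature X -> cool X t = cool_tilde X t.
Proof. intros HN Ht. rewrite cool_eq, HN. destruct (Rle_dec t (temperature X)); [reflexivity|lra]. Qed.

Lemma cool_frozen X t : good X -> is_number X = false -> temperature X < t -> cool X t = num (val X).
Proof.
  intros GX HN Ht. unfold val. rewrite (cool_eq X t), HN.
  destruct (Rle_dec t (temperature X)); [lra|].
  rewrite (cool_live X (temperature X) HN (Rle_refl _)). reflexivity.
Qed.

Lemma cool_after X t : good X -> temperature X <= t -> Ls (cool X t) = val X /\ Rs (cool X t) = val X.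
Proof.
  intros GX Ht. unfold val. destruct (is_number X) eqn:HN.
  - rewrite !cool_number by auto. destruct (is_number_spec X HN) as [H1 H2].
    rewrite Ls_empty, Rs_empty by apply H1. auto.
  - destruct (coolok_all X GX) as [_ [_ [_ [_ [_ TS]]]]]. destruct (TS HN) as [_ [T1 _]].
    rewrite (cool_live X (temperature X) HN (Rle_refl _)).
    destruct (Rle_lt_dec t (temperature X)).
    + assert (t = temperature X) by lra. subst t. rewrite cool_live by (auto; lra). auto.
    + rewrite cool_frozen by auto. unfold val. rewrite (cool_live X (temperature X) HN (Rle_refl _)).
      rewrite Ls_num, Rs_num. auto.
Qed.

Lemma frozen_opts X t : good X -> is_number X = false -> temperature X < t ->
  (forall x, In x (opts true X) -> Rs (cool x t) - t <= val X) /\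
  (forall x, In x (opts false X) -> val X <= Ls (cool x t) + t).
Proof.
  intros GX HN Ht.
  destruct (good_nonnum X GX HN) as [HL HR].
  assert (IHo : forall b x, In x (opts b X) -> coolok x).
  { intros b x Hx. apply coolok_all. eapply good_opt; eauto. }
  pose proof (temperature_nonneg X GX).
  destruct (tl_slopes X HL HR IHo (temperature X) t ltac:(lra)) as [[a1 a2] [b1 b2]].
  destruct (coolok_all X GX) as [_ [_ [_ [_ [_ TS]]]]]. destruct (TS HN) as [_ [T1 _]].
  unfold val. rewrite (cool_live X (temperature X) HN (Rle_refl _)).
  split; intros x Hx.
  - pose proof (tlL_ge X x t Hx). lra.
  - pose proof (tlR_le X x t Hx). lra.
Qed.

Lemma topgood_sim c A B : Sim c A B -> topgood A -> topgood B.
Proof.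
  intros HS [H1 [H2 H3]]. pose proof (Sim_scores _ _ _ HS) as [E1 E2].
  inversion HS as [X0 Y0 He Hd Hf Hb]; subst.
  split; [|split].
  - rewrite <- (He true), <- (He false). auto.
  - lra.
  - intro E. apply (He true) in E as E'. rewrite (Hd true E'), (Hd false (proj1 H1 E')), (H3 E'). reflexivity.
Qed.

Lemma topgood_cool Y t : good Y -> 0 <= t -> topgood (cool Y t).
Proof.
  intros GY Ht. destruct (is_number Y) eqn:HN.
  - rewrite cool_number by auto. apply good_top; auto.
  - destruct (Rle_lt_dec t (temperature Y)).
    + destruct (good_nonnum Y GY HN) as [HL HR].
      destruct (coolok_all Y GY) as [_ [C2 _]].
      split; [|split].
      * rewrite cool_live by auto. rewrite opts_tl_L, opts_tl_R.
        destruct (opts true Y); [congruence|]. destruct (opts false Y); [congruence|]. simpl. split; discriminate.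
      * apply C2; auto.
      * rewrite cool_live by auto. rewrite opts_tl_L. destruct (opts true Y); [congruence|]. discriminate.
    + rewrite cool_frozen by auto. apply good_top, good_num.
Qed.

Lemma good_cool X t : good X -> 0 <= t -> good (cool X t).
Proof.
  intros GX Ht H Hp.
  assert (K : forall g, position H g -> (exists Y c, position Y X /\ Sim c (cool Y t) g) ->
     exists Y c, position Y X /\ Sim c (cool Y t) H).
  { clear Hp. intros g Hp. induction Hp as [g|k h g Ho Hp IHp]; auto.
    intros [Y [c [HY HS]]]. apply IHp.
    assert (Hh : exists b, In h (opts b g)) by (destruct Ho; [exists true|exists false]; auto).
    destruct Hh as [b Hh].
    inversion HS as [X0 Y0 He Hd Hf Hb]; subst.
    destruct (Hb b h Hh) as [y [Hy Sy]].
    assert (GY : good Y) by (intros K HK; apply GX; eapply position_trans; eauto).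
    destruct (is_number Y) eqn:HN.
    - rewrite cool_number in Hy by auto. destruct (is_number_spec Y HN) as [E _].
      rewrite E in Hy. destruct Hy.
    - destruct (Rle_lt_dec t (temperature Y)).
      + rewrite cool_live in Hy by auto. destruct b.
        * rewrite opts_tl_L in Hy. apply in_map_iff in Hy. destruct Hy as [x [<- Hx]].
          exists x, (- t + c). split.
          -- eapply position_trans; [eapply opt_position; eauto| auto].
          -- eapply Sim_trans; [apply Sim_shift| exact Sy].
        * rewrite opts_tl_R in Hy. apply in_map_iff in Hy. destruct Hy as [x [<- Hx]].
          exists x, (t + c). split.
          -- eapply position_trans; [eapply opt_position; eauto| auto].
          -- eapply Sim_trans; [apply Sim_shift| exact Sy].
      + rewrite cool_frozen in Hy by auto. destruct b; destruct Hy. }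
  destruct (K _ Hp) as [Y [c [HY HS]]].
  { exists X, 0. split; [apply pos_refl| apply Sim_refl]. }
  eapply topgood_sim; eauto. apply topgood_cool; auto.
  intros K' HK; apply GX; eapply position_trans; eauto.
Qed.


Definition sumL (l : list game) := fold_right add (num 0) l.

Fixpoint repl (l : list game) (i : nat) (x : game) : list game :=
  match l, i with
  | [], _ => []
  | _ :: l', O => x :: l'
  | y :: l', S i' => y :: repl l' i' x
  end.

Fixpoint lsize (l : list game) : nat :=
  match l with [] => 0%nat | x :: l' => (gsize x + lsize l')%nat end.

Lemma opts_num b a : opts b (num a) = [].
Proof. destruct b; reflexivity. Qed.

Lemma in_opts_sumL b l z : In z (opts b (sumL l)) <->
  exists i x, (i < length l)%nat /\ In x (opts b (nth i l (num 0))) /\ z = sumL (repl l i x).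
Proof.
  revert z. induction l as [|X l IH]; intro z; simpl.
  - rewrite opts_num. split; [intros []|intros [i [x [Hi _]]]; simpl in Hi; lia].
  - rewrite in_opts_add. split.
    + intros [[x [Hx ->]]|[y [Hy ->]]].
      * exists 0%nat, x. simpl. repeat split; auto. lia.
      * apply IH in Hy. destruct Hy as [i [x [Hi [Hx ->]]]].
        exists (S i), x. simpl. repeat split; auto. lia.
    + intros [[|i] [x [Hi [Hx ->]]]]; simpl in *.
      * left. exists x; auto.
      * right. exists (sumL (repl l i x)). split; auto. apply IH. exists i, x. repeat split; auto. lia.
Qed.

Lemma opts_sumL_nil b l : opts b (sumL l) = [] <-> forall X, In X l -> opts b X = [].
Proof.
  induction l as [|X l IH]; simpl.
  - rewrite opts_num. split; auto. intros _ Y [].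
  - rewrite opts_add_nil, IH. split.
    + intros [H1 H2] Y [<-|HY]; auto.
    + intro H. split; auto.
Qed.

Lemma map_repl (f : game -> game) l i x : map f (repl l i x) = repl (map f l) i (f x).
Proof. revert i; induction l as [|y l IH]; intros [|i]; simpl; f_equal; auto. Qed.

Lemma length_repl l i x : length (repl l i x) = length l.
Proof. revert i; induction l as [|y l IH]; intros [|i]; simpl; auto. Qed.

Lemma In_repl l i x y : In y (repl l i x) -> In y l \/ y = x.
Proof.
  revert i; induction l as [|z l IH]; intros [|i]; simpl; try tauto.
  - intros [<-|H]; auto.
  - intros [<-|H]; auto. destruct (IH i H); auto.
Qed.

Lemma lsize_repl l i x : (i < length l)%nat -> (gsize x < gsize (nth i l (num 0)))%nat ->
  (lsize (repl l i x) < lsize l)%nat.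
Proof.
  revert i; induction l as [|y l IH]; intros [|i]; simpl; intros Hi Hx; try lia.
  specialize (IH i ltac:(lia) Hx). lia.
Qed.

Lemma repl_nth l i : repl l i (nth i l (num 0)) = l.
Proof. revert i; induction l as [|y l IH]; intros [|i]; simpl; f_equal; auto. Qed.

Lemma nth_map_cool l i t : (i < length l)%nat ->
  nth i (map (fun X => cool X t) l) (num 0) = cool (nth i l (num 0)) t.
Proof.
  intro Hi. rewrite (nth_indep _ (num 0) (cool (num 0) t)) by (rewrite length_map; auto).
  apply (map_nth (fun X => cool X t)).
Qed.

Lemma sumL_cons x l : sumL (x :: l) = add x (sumL l).
Proof. reflexivity. Qed.

Lemma Sim_sumL_repl c A A' m i : Sim c A A' -> (i < length m)%nat ->
  Sim c (sumL (repl m i A)) (sumL (repl m i A')).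
Proof.
  revert i; induction m as [|y m IH]; intros [|i] HS Hi; cbn [repl length] in *; rewrite ?sumL_cons; try lia.
  - apply (Sim_eq (c + 0)); [lra|]. apply Sim_add; auto. apply Sim_refl.
  - apply (Sim_eq (0 + c)); [lra|]. apply Sim_add; [apply Sim_refl| apply IH; auto; lia].
Qed.

Lemma Sim_extract A m i : (i < length m)%nat ->
  Sim 0 (sumL (repl m i A)) (add A (sumL (repl m i (num 0)))).
Proof.
  revert i; induction m as [|y m IH]; intros [|i] Hi; cbn [repl length] in *; rewrite ?sumL_cons; try lia.
  - apply (Sim_eq (0 + 0)); [lra|]. apply Sim_add; [apply Sim_refl|].
    apply Sim_numl, numlike_num.
  - apply (Sim_eq (0 + 0)); [lra|]. eapply Sim_trans; [|apply Sim_swap].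
    apply (Sim_eq (0 + 0)); [lra|]. apply Sim_add; [apply Sim_refl| apply IH; lia].
Qed.

Lemma Sim_num a c : Sim c (num a) (num (a + c)).
Proof.
  constructor; intro b; rewrite ?opts_num; try tauto.
  - intros _. destruct b; reflexivity.
  - intros x [].
  - intros x [].
Qed.

Lemma good_sumL l : (forall X, In X l -> good X) -> good (sumL l).
Proof.
  induction l as [|X l IH]; simpl; intro H.
  - apply good_num.
  - apply good_add; auto.
Qed.

Lemma sumL_flat l : (forall X, In X l -> good X /\ Ls X = Rs X) ->
  Ls (sumL l) = fold_right (fun X acc => Ls X + acc) 0 l /\
  Rs (sumL l) = fold_right (fun X acc => Ls X + acc) 0 l.
Proof.
  induction l as [|X l IH]; simpl; intro H.
  - split; reflexivity.
  - destruct IH as [IH1 IH2]; [intros; apply H; auto|].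
    destruct (H X (or_introl eq_refl)) as [GX EX].
    assert (GS : good (sumL l)) by (apply good_sumL; intros; apply H; auto).
    destruct (Milnor X (sumL l) GX GS) as [m1 [m2 [m3 [m4 [m5 m6]]]]].
    split; lra.
Qed.

Lemma numlike_is_number X : opts true X = [] -> opts false X = [] -> dec true X = dec false X ->
  is_number X = true.
Proof.
  destruct X as [[a|h hs] [b|h' hs']]; unfold opts, dec; simpl; try discriminate.
  intros _ _ E. destruct (Req_EM_T a b); congruence.
Qed.

Lemma good_noopt_number X b : good X -> opts b X = [] -> is_number X = true.
Proof.
  intros GX E. destruct (good_top X GX) as [H1 [_ H3]].
  assert (E1 : opts true X = []) by (destruct b; auto; apply H1; auto).
  apply numlike_is_number; auto. apply H1; auto.
Qed.

Lemma number_noopt X b : is_number X = true -> opts b X = [].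
Proof. intro H. apply (proj1 (is_number_spec X H)). Qed.


Fixpoint allpos (g : game) : list game :=
  match g with Game l r => g :: (sallpos l ++ sallpos r) end
with sallpos (s : side) : list game :=
  match s with Empty _ => [] | Opts h hs => allpos h ++ (fix la (l : list game) : list game :=
     match l with [] => [] | x :: l' => allpos x ++ la l' end) hs end.

Lemma allpos_self g : In g (allpos g).
Proof. destruct g; simpl; auto. Qed.

Lemma allpos_opt b x g : In x (opts b g) -> incl (allpos x) (allpos g).
Proof.
  destruct g as [l r]. unfold opts, side_of.
  assert (H: forall s, In x (side_opts s) -> incl (allpos x) (sallpos s)).
  { intros [a|h hs]; simpl; [tauto|].
    intros [<-|Hin]; [apply incl_appl, incl_refl|].
    apply incl_appr. induction hs as [|y hs IH]; simpl in *; [tauto|].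
    destruct Hin as [<-|Hin]; [apply incl_appl, incl_refl| apply incl_appr; auto]. }
  intros Hx k Hk. simpl. right. destruct b; simpl in Hx.
  - apply in_or_app; left. apply (H _ Hx); auto.
  - apply in_or_app; right. apply (H _ Hx); auto.
Qed.

Lemma position_allpos k g : position k g -> In k (allpos g).
Proof.
  intro Hp. induction Hp as [g|k h g Ho Hp IH].
  - apply allpos_self.
  - destruct Ho as [Ho|Ho].
    + apply (allpos_opt true h g Ho); auto.
    + apply (allpos_opt false h g Ho); auto.
Qed.

Lemma filter_le (p q : game -> bool) L : (forall x, In x L -> p x = true -> q x = true) ->
  (length (filter p L) <= length (filter q L))%nat.
Proof.
  induction L as [|y L IH]; simpl; intro H; auto.
  destruct (p y) eqn:Ep.
  - rewrite (H y (or_introl eq_refl) Ep). simpl. specialize (IH ltac:(intros z Hz; apply H; right; exact Hz)). lia.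
  - destruct (q y); simpl; specialize (IH ltac:(intros z Hz; apply H; right; exact Hz)); lia.
Qed.

Lemma filter_lt (p q : game -> bool) L : (forall x, In x L -> p x = true -> q x = true) ->
  (exists x, In x L /\ q x = true /\ p x = false) -> (length (filter p L) < length (filter q L))%nat.
Proof.
  induction L as [|y L IH]; simpl; intros H [x [Hx [Hq Hp]]]; [destruct Hx|].
  destruct Hx as [<-|Hx].
  - rewrite Hp, Hq. simpl. pose proof (filter_le p q L ltac:(intros z Hz; apply H; right; exact Hz)). lia.
  - assert (IH' : (length (filter p L) < length (filter q L))%nat).
    { apply IH; [intros z Hz; apply H; right; exact Hz| exists x; auto]. }
    destruct (p y) eqn:Ep.
    + rewrite (H y (or_introl eq_refl) Ep). simpl. lia.
    + destruct (q y); simpl; lia.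
Qed.

Definition Sval (l : list game) := fold_right (fun X acc => val X + acc) 0 l.

Lemma flat_cool l t : (forall X, In X l -> good X /\ temperature X <= t) -> 0 <= t ->
  Ls (sumL (map (fun X => cool X t) l)) = Sval l /\ Rs (sumL (map (fun X => cool X t) l)) = Sval l.
Proof.
  intros H Ht.
  destruct (sumL_flat (map (fun X => cool X t) l)) as [E1 E2].
  { intros Y HY. apply in_map_iff in HY. destruct HY as [X [<- HX]].
    destruct (H X HX) as [GX TX]. split; [apply good_cool; auto|].
    destruct (cool_after X t GX TX). congruence. }
  rewrite E1, E2.
  assert (fold_right (fun X acc => Ls X + acc) 0 (map (fun X => cool X t) l) = Sval l).
  { clear E1 E2. revert H. induction l as [|X l IH]; simpl; auto. intro H.
    rewrite IH by (intros z Hz; apply H; right; exact Hz). destruct (H X (or_introl eq_refl)) as [GX TX].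
    rewrite (proj1 (cool_after X t GX TX)). reflexivity. }
  auto.
Qed.

Definition band t l := Ls (sumL (map (fun X => cool X t) l)) <= Ls (sumL l) <=
     Ls (sumL (map (fun X => cool X t) l)) + t /\
   Rs (sumL (map (fun X => cool X t) l)) - t <= Rs (sumL l) <= Rs (sumL (map (fun X => cool X t) l)).

Lemma fold_max_le (l : list R) : (forall x, In x l -> x <= fold_right Rmax 0 l) /\ 0 <= fold_right Rmax 0 l /\
  (fold_right Rmax 0 l = 0 \/ In (fold_right Rmax 0 l) l).
Proof.
  induction l as [|y l [IH1 [IH2 IH3]]]; simpl.
  - split; [tauto|split; [lra| auto]].
  - split; [|split].
    + intros x [<-|Hx]; [apply Rmax_l| eapply Rle_trans; [apply IH1; auto| apply Rmax_r]].
    + eapply Rle_trans; [exact IH2| apply Rmax_r].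
    + destruct (Rle_dec y (fold_right Rmax 0 l)).
      * rewrite Rmax_right by auto. destruct IH3 as [E|E]; [left; exact E| right; right; exact E].
      * rewrite Rmax_left by lra. right; left; reflexivity.
Qed.

Lemma fold_max_lt (l : list R) t : 0 < t -> (forall x, In x l -> x < t) -> fold_right Rmax 0 l < t.
Proof.
  intros Ht H. induction l as [|y l IH]; simpl; auto.
  apply Rmax_lub_lt; [apply H; simpl; auto| apply IH; intros; apply H; simpl; auto].
Qed.

Lemma temperature_number X : is_number X = true -> temperature X = 0.
Proof. unfold temperature. intros ->. reflexivity. Qed.


Lemma posG_good G (GG : good G) X : position X G -> good X.
Proof. intros H K HK; apply GG; eapply position_trans; eauto. Qed.

Definition kc G (t : R) := length (filter (fun P => andb (negb (is_number P))
   (if Rlt_dec (temperature P) t then true else false)) (allpos G)).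

Lemma cold_classify X t b : good X -> opts b (cool X t) = [] -> is_number X = true \/ temperature X < t.
Proof.
  intros GX E. destruct (is_number X) eqn:HN; [left; auto|right].
  destruct (Rle_lt_dec t (temperature X)) as [Hl|Hl]; auto. exfalso.
  rewrite cool_live in E by auto. destruct (good_nonnum X GX HN) as [HL HR].
  destruct b; [rewrite opts_tl_L in E| rewrite opts_tl_R in E].
  - destruct (opts true X); [congruence| discriminate].
  - destruct (opts false X); [congruence| discriminate].
Qed.

Lemma map_cool_numbers l t : (forall X, In X l -> is_number X = true) -> map (fun X => cool X t) l = l.
Proof.
  intro H. induction l as [|X l IH]; simpl; auto.
  rewrite cool_number by (apply H; simpl; auto). f_equal. apply IH. intros; apply H; simpl; auto.
Qed.

Theorem band_all G (GG : good G) n : forall t l, (kc G t < n)%nat -> 0 <= t -> (forall X, In X l -> position X G) -> band t l.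
Proof.
  induction n as [|n IHn]; intros t l Hk Ht Hl; [lia|].
  assert (Cold : forall m, (forall X, In X m -> position X G) ->
     (forall X, In X m -> is_number X = true \/ temperature X < t) ->
     Sval m <= Ls (sumL m) /\ Rs (sumL m) <= Sval m).
  { intros m Hm Hc.
    destruct (classic (exists X, In X m /\ is_number X = false)) as [[X0 [HX0 HN0]]|Hno].
    - set (ts := fold_right Rmax 0 (map temperature m)).
      destruct (fold_max_le (map temperature m)) as [M1 [M2 M3]]. fold ts in M1, M2, M3.
      assert (Tpos : 0 < t).
      { destruct (Hc X0 HX0) as [E|E]; [congruence|]. pose proof (temperature_nonneg X0 (posG_good G GG X0 (Hm X0 HX0))). lra. }
      assert (Tlt : ts < t).
      { apply fold_max_lt; auto. intros x Hx. apply in_map_iff in Hx. destruct Hx as [X [<- HX]].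
        destruct (Hc X HX) as [E|E]; auto. rewrite temperature_number; auto. }
      assert (HW : exists W, In W m /\ is_number W = false /\ temperature W = ts).
      { destruct M3 as [E|E].
        - exists X0. repeat split; auto.
          pose proof (temperature_nonneg X0 (posG_good G GG X0 (Hm X0 HX0))).
          assert (temperature X0 <= ts) by (apply M1, in_map; auto). lra.
        - apply in_map_iff in E. destruct E as [W [EW HW]].
          destruct (is_number W) eqn:HNW.
          + rewrite temperature_number in EW by auto. exists X0. repeat split; auto.
            pose proof (temperature_nonneg X0 (posG_good G GG X0 (Hm X0 HX0))).
            assert (temperature X0 <= ts) by (apply M1, in_map; auto). lra.
          + exists W. auto. }
      destruct HW as [W [HWm [HWn HWt]]].
      assert (Hkk : (kc G ts < kc G t)%nat).
      { unfold kc. apply filter_lt.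
        - intros x _ Hx. apply andb_prop in Hx. destruct Hx as [Hx1 Hx2]. rewrite Hx1. simpl.
          destruct (Rlt_dec (temperature x) ts); [|discriminate]. destruct (Rlt_dec (temperature x) t); auto. lra.
        - exists W. split; [apply position_allpos, Hm; auto|]. rewrite HWn. simpl.
          destruct (Rlt_dec (temperature W) t); [|lra]. destruct (Rlt_dec (temperature W) ts); [lra|]. auto. }
      assert (Bts : band ts m) by (apply IHn; auto; lia).
      destruct (flat_cool m ts) as [F1 F2]; auto.
      { intros X HX. split; [apply (posG_good G GG); auto|]. apply M1, in_map; auto. }
      destruct Bts as [[b1 b2] [b3 b4]]. lra.
    - assert (AllN : forall X, In X m -> is_number X = true).
      { intros X HX. destruct (is_number X) eqn:E; auto. exfalso; apply Hno; eauto. }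
      destruct (flat_cool m t) as [F1 F2]; auto.
      { intros X HX. split; [apply (posG_good G GG); auto|]. rewrite temperature_number; auto. }
      rewrite map_cool_numbers in F1, F2 by auto. lra. }
  clear Hk.
  revert Hl. induction l as [l IHl] using (measure_ind lsize). intro Hl.
  set (Ym := map (fun X => cool X t) l).
  assert (HYlen : length Ym = length l) by (unfold Ym; apply length_map).
  assert (Hnth : forall i, (i < length l)%nat -> nth i Ym (num 0) = cool (nth i l (num 0)) t).
  { intros; unfold Ym; apply nth_map_cool; auto. }
  assert (HinL : forall i, (i < length l)%nat -> In (nth i l (num 0)) l) by (intros; apply nth_In; auto).
  assert (Gi : forall i, (i < length l)%nat -> good (nth i l (num 0))) by (intros; apply (posG_good G GG), Hl, HinL; auto).
  assert (IH' : forall i x b, (i < length l)%nat -> In x (opts b (nth i l (num 0))) ->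
       band t (repl l i x) /\ map (fun X => cool X t) (repl l i x) = repl Ym i (cool x t)).
  { intros i x b Hi Hx. split; [|unfold Ym; apply (map_repl (fun X => cool X t))].
    apply IHl.
    - apply lsize_repl; auto. eapply opts_size; eauto.
    - intros Y HY. destruct (In_repl _ _ _ _ HY) as [HY' | ->]; auto.
      eapply position_trans; [eapply opt_position; eauto| apply Hl, HinL; auto]. }
  assert (GYm : forall Y, In Y Ym -> good Y).
  { intros Y HY. unfold Ym in HY. apply in_map_iff in HY. destruct HY as [X [<- HX]].
    apply good_cool; auto. apply (posG_good G GG); auto. }
  assert (GR0 : forall i, good (sumL (repl Ym i (num 0)))).
  { intros i. apply good_sumL. intros Y HY. destruct (In_repl _ _ _ _ HY) as [HY' | ->]; auto. apply good_num. }
  assert (Frz : forall i, (i < length l)%nat -> is_number (nth i l (num 0)) = false ->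
      temperature (nth i l (num 0)) < t ->
      Ls (sumL Ym) = Ls (sumL (repl Ym i (num 0))) + val (nth i l (num 0)) /\
      Rs (sumL Ym) = Rs (sumL (repl Ym i (num 0))) + val (nth i l (num 0))).
  { intros i Hi HN HT.
    assert (E : Ym = repl Ym i (num (0 + val (nth i l (num 0))))).
    { rewrite Rplus_0_l. rewrite <- (cool_frozen _ t (Gi i Hi) HN HT), <- Hnth by auto.
      symmetry; apply repl_nth. }
    pose proof (Sim_sumL_repl _ _ _ Ym i (Sim_num 0 (val (nth i l (num 0)))) ltac:(lia)) as HS.
    rewrite <- E in HS. apply Sim_scores in HS. exact HS. }
  assert (Live : forall i x b, (i < length l)%nat -> In x (opts b (nth i l (num 0))) ->
      is_number (nth i l (num 0)) = false -> t <= temperature (nth i l (num 0)) ->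
      In (sumL (repl Ym i (add (cool x t) (num (if b then - t else t))))) (opts b (sumL Ym)) /\
      Ls (sumL (repl Ym i (add (cool x t) (num (if b then - t else t))))) =
        Ls (sumL (repl Ym i (cool x t))) + (if b then - t else t) /\
      Rs (sumL (repl Ym i (add (cool x t) (num (if b then - t else t))))) =
        Rs (sumL (repl Ym i (cool x t))) + (if b then - t else t)).
  { intros i x b Hi Hx HN HT. split.
    - apply in_opts_sumL. exists i, (add (cool x t) (num (if b then - t else t))).
      split; [lia|split; auto]. rewrite Hnth by auto. rewrite (cool_live (nth i l (num 0)) t) by auto.
      destruct b; [rewrite opts_tl_L| rewrite opts_tl_R]; apply in_map_iff; eauto.
    - apply Sim_scores. apply Sim_sumL_repl; [apply Sim_shift| lia]. }
  assert (InL : forall i x b, (i < length l)%nat -> In x (opts b (nth i l (num 0))) ->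
      In (sumL (repl l i x)) (opts b (sumL l))).
  { intros i x b Hi Hx. apply in_opts_sumL. exists i, x. auto. }
  assert (NN : forall i x b, (i < length l)%nat -> In x (opts b (nth i l (num 0))) ->
      is_number (nth i l (num 0)) = false).
  { intros i x b Hi Hx. destruct (is_number (nth i l (num 0))) eqn:E; auto.
    rewrite (number_noopt _ b E) in Hx. destruct Hx. }
  assert (OptY : forall i y b, (i < length l)%nat -> In y (opts b (nth i Ym (num 0))) ->
      exists x, In x (opts b (nth i l (num 0))) /\ t <= temperature (nth i l (num 0)) /\
        is_number (nth i l (num 0)) = false /\ y = add (cool x t) (num (if b then - t else t))).
  { intros i y b Hi Hy. rewrite Hnth in Hy by auto.
    destruct (is_number (nth i l (num 0))) eqn:HN.
    - rewrite cool_number in Hy by auto. rewrite (number_noopt _ b HN) in Hy. destruct Hy.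
    - destruct (Rle_lt_dec t (temperature (nth i l (num 0)))) as [HT|HT].
      + rewrite cool_live in Hy by auto. destruct b; [rewrite opts_tl_L in Hy| rewrite opts_tl_R in Hy];
        apply in_map_iff in Hy; destruct Hy as [x [<- Hx]]; exists x; auto.
      + rewrite cool_frozen in Hy by auto. rewrite opts_num in Hy. destruct Hy. }
  assert (ColdY : forall b, opts b (sumL Ym) = [] ->
      Ls (sumL Ym) = Sval l /\ Rs (sumL Ym) = Sval l /\ Sval l <= Ls (sumL l) /\ Rs (sumL l) <= Sval l).
  { intros b E. rewrite opts_sumL_nil in E.
    assert (Hc : forall X, In X l -> is_number X = true \/ temperature X < t).
    { intros X HX. apply (cold_classify X t b); [apply (posG_good G GG); auto|]. apply E.
      unfold Ym. apply in_map_iff. eauto. }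
    destruct (Cold l Hl Hc) as [C1 C2].
    assert (Hf : forall X, In X l -> good X /\ temperature X <= t).
    { intros X HX. split; [apply (posG_good G GG); auto|]. destruct (Hc X HX) as [H|H]; [|lra].
      rewrite temperature_number; auto. }
    destruct (flat_cool l t Hf Ht) as [F1 F2].
    fold Ym in F1, F2. auto. }
  assert (NoOptX : forall b, opts b (sumL l) = [] -> Ym = l).
  { intros b E. rewrite opts_sumL_nil in E. unfold Ym. apply map_cool_numbers.
    intros X HX. apply (good_noopt_number X b); [apply (posG_good G GG); auto| apply E; auto]. }
  unfold band. fold Ym.
  split; split.
  -
    destruct (nil_dec (opts true (sumL Ym))) as [E|E].
    + destruct (ColdY true E) as [c1 [c2 [c3 c4]]]. lra.
    + destruct (Ls_att _ E) as [z [Hz ->]]. apply in_opts_sumL in Hz.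
      destruct Hz as [i [y [Hi [Hy ->]]]]. rewrite HYlen in Hi.
      destruct (OptY i y true Hi Hy) as [x [Hx [HT [HN ->]]]].
      destruct (IH' i x true Hi Hx) as [[_ [c1 _]] Em]. rewrite Em in c1.
      destruct (Live i x true Hi Hx HN HT) as [_ [_ e]].
      pose proof (Ls_ge _ _ (InL i x true Hi Hx)). lra.
  -
    destruct (nil_dec (opts true (sumL l))) as [E|E].
    + rewrite (NoOptX true E). lra.
    + apply Ls_le_of; auto. intros z Hz. apply in_opts_sumL in Hz.
      destruct Hz as [i [x [Hi [Hx ->]]]].
      destruct (IH' i x true Hi Hx) as [[_ [_ d]] Em]. rewrite Em in d.
      pose proof (NN i x true Hi Hx) as HN.
      destruct (Rle_lt_dec t (temperature (nth i l (num 0)))) as [HT|HT].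
      * destruct (Live i x true Hi Hx HN HT) as [Hin [_ e]].
        pose proof (Ls_ge _ _ Hin). lra.
      * destruct (Frz i Hi HN HT) as [f1 _].
        pose proof (Sim_scores _ _ _ (Sim_extract (cool x t) Ym i ltac:(lia))) as [s1 s2].
        assert (Gx : good x) by exact (good_opt _ _ _ (Gi i Hi) Hx).
        destruct (Milnor (cool x t) _ (good_cool x t Gx Ht) (GR0 i)) as [_ [_ [m3 _]]].
        destruct (frozen_opts _ t (Gi i Hi) HN HT) as [fo _]. specialize (fo x Hx).
        lra.
  -
    destruct (nil_dec (opts false (sumL l))) as [E|E].
    + rewrite (NoOptX false E). lra.
    + apply Rs_ge_of; auto. intros z Hz. apply in_opts_sumL in Hz.
      destruct Hz as [i [x [Hi [Hx ->]]]].
      destruct (IH' i x false Hi Hx) as [[[b1 _] _] Em]. rewrite Em in b1.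
      pose proof (NN i x false Hi Hx) as HN.
      destruct (Rle_lt_dec t (temperature (nth i l (num 0)))) as [HT|HT].
      * destruct (Live i x false Hi Hx HN HT) as [Hin [e _]].
        pose proof (Rs_le _ _ Hin). lra.
      * destruct (Frz i Hi HN HT) as [_ f2].
        pose proof (Sim_scores _ _ _ (Sim_extract (cool x t) Ym i ltac:(lia))) as [s1 s2].
        assert (Gx : good x) by exact (good_opt _ _ _ (Gi i Hi) Hx).
        destruct (Milnor (cool x t) _ (good_cool x t Gx Ht) (GR0 i)) as [_ [_ [_ [_ [_ m6]]]]].
        destruct (frozen_opts _ t (Gi i Hi) HN HT) as [_ fo]. specialize (fo x Hx).
        lra.
  -
    destruct (nil_dec (opts false (sumL Ym))) as [E|E].
    + destruct (ColdY false E) as [c1 [c2 [c3 c4]]]. lra.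
    + destruct (Rs_att _ E) as [z [Hz ->]]. apply in_opts_sumL in Hz.
      destruct Hz as [i [y [Hi [Hy ->]]]]. rewrite HYlen in Hi.
      destruct (OptY i y false Hi Hy) as [x [Hx [HT [HN ->]]]].
      destruct (IH' i x false Hi Hx) as [[[_ a1] _] Em]. rewrite Em in a1.
      destruct (Live i x false Hi Hx HN HT) as [_ [e _]].
      pose proof (Rs_le _ _ (InL i x false Hi Hx)). lra.
Qed.




Lemma good_of_hyps G : dicotic G -> nonzugzwang G -> terminals_are_numbers G -> good G.
Proof.
  intros HD HNZ HT H Hp. split; [|split].
  - specialize (HD H Hp). unfold has_options in HD. unfold opts, side_of.
    destruct (nil_dec (side_opts (left_side H))) as [E1|E1];
    destruct (nil_dec (side_opts (right_side H))) as [E2|E2]; simpl; split; intro; try tauto.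
  - specialize (HNZ H Hp). lra.
  - intro E. specialize (HD H Hp). unfold has_options in HD. unfold opts, dec, side_of in *. simpl in *.
    destruct H as [[a|h hs] [b|h' hs']]; simpl in *; try discriminate.
    + apply (HT _ a b Hp eq_refl).
    + exfalso. apply HD; [discriminate| reflexivity].
Qed.

Lemma nsum_sim G n : Sim 0 (nsum (S n) G) (sumL (repeat G (S n))).
Proof.
  induction n as [|n IH].
  - simpl. apply Sim_shift.
  - change (nsum (S (S n)) G) with (add G (nsum (S n) G)).
    change (sumL (repeat G (S (S n)))) with (add G (sumL (repeat G (S n)))).
    apply (Sim_eq (0 + 0)); [lra|]. apply Sim_add; [apply Sim_refl| exact IH].
Qed.

Lemma cv_lemma (u : nat -> R) v C : 0 <= C -> (forall n, Rabs (u n - v) <= C / INR (S n)) -> Un_cv u v.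
Proof.
  intros HC H eps Heps.
  destruct (archimed_cor1 (eps / (C + 1))) as [N [HN HN0]].
  { apply Rdiv_lt_0_compat; lra. }
  exists N. intros n Hn. unfold R_dist. eapply Rle_lt_trans; [apply H|].
  assert (HNp : 0 < INR N) by (apply lt_0_INR; lia).
  assert (HSn : INR N <= INR (S n)) by (apply le_INR; lia).
  assert (Ha : / INR (S n) <= / INR N) by (apply Rinv_le_contravar; lra).
  assert (Hb : C * / INR (S n) <= C * (eps / (C + 1))).
  { apply Rmult_le_compat_l; auto. lra. }
  assert (Hc : C * (eps / (C + 1)) = eps - eps / (C + 1)) by (field; lra).
  assert (Hd : 0 < eps / (C + 1)) by (apply Rdiv_lt_0_compat; lra).
  unfold Rdiv. lra.
Qed.

Lemma abs_bound L M v t : 0 < M -> M * v - t <= L <= M * v + t -> Rabs (L / M - v) <= t / M.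
Proof.
  intros HM HL.
  assert (E : L / M - v = (L - M * v) * / M) by (field; lra).
  rewrite E, Rabs_mult, (Rabs_pos_eq (/ M)) by (left; apply Rinv_0_lt_compat; auto).
  unfold Rdiv. apply Rmult_le_compat_r; [left; apply Rinv_0_lt_compat; auto|].
  apply Rabs_le. lra.
Qed.

Lemma fold_repeat H m : fold_right (fun X acc => Ls X + acc) 0 (repeat H m) = INR m * Ls H.
Proof.
  induction m as [|m IH]; simpl repeat; simpl fold_right.
  - simpl. lra.
  - rewrite IH, S_INR. lra.
Qed.

Theorem mainTheorem4 (G : game) :
  dicotic G -> nonzugzwang G -> terminals_are_numbers G ->
  Ls (cool G (temperature G)) = Rs (cool G (temperature G)) /\
  Un_cv (fun n => Ls (nsum (S n) G) / INR (S n)) (Ls (cool G (temperature G))) /\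
  Un_cv (fun n => Rs (nsum (S n) G) / INR (S n)) (Ls (cool G (temperature G))).
Proof.
  intros HD HNZ HT. pose proof (good_of_hyps G HD HNZ HT) as GG.
  set (t := temperature G). set (Hc := cool G t).
  pose proof (temperature_nonneg G GG) as Ht0. fold t in Ht0.
  destruct (cool_after G t GG (Rle_refl _)) as [V1 V2]. fold Hc in V1, V2.
  assert (E1 : Ls Hc = Rs Hc) by congruence.
  assert (GH : good Hc) by (apply good_cool; auto).
  assert (Bnd : forall n, let M := INR (S n) in
     M * Ls Hc <= Ls (nsum (S n) G) <= M * Ls Hc + t /\
     M * Ls Hc - t <= Rs (nsum (S n) G) <= M * Ls Hc).
  { intro n. cbv zeta.
    assert (B : band t (repeat G (S n))).
    { apply (band_all G GG (S (kc G t))); auto. intros X HX. apply repeat_spec in HX. subst. apply pos_refl. }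
    unfold band in B. rewrite map_repeat in B. fold Hc in B.
    destruct (sumL_flat (repeat Hc (S n))) as [F1 F2].
    { intros X HX. apply repeat_spec in HX. subst. auto. }
    rewrite fold_repeat in F1, F2.
    destruct (Sim_scores _ _ _ (nsum_sim G n)) as [S1 S2].
    rewrite F1, F2 in B. lra. }
  split; auto. split.
  - apply (cv_lemma _ _ t); auto. intro n. apply abs_bound.
    + apply lt_0_INR; lia.
    + destruct (Bnd n) as [[b1 b2] _]. lra.
  - apply (cv_lemma _ _ t); auto. intro n. apply abs_bound.
    + apply lt_0_INR; lia.
    + destruct (Bnd n) as [_ [b1 b2]]. rewrite <- E1 in *. lra.
Qed.
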